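(* Let $G$ be a finite soluble non-nilpotent group. Then $G\in\mathfrak{Y}_n$ if and only if $G$ splits as a semidirect product $G=\langle x\rangle\ltimes A$, where $\langle x\rangle$ is a $p$-group for some prime $p$, $A$ is an abelian $p'$-group, $x^p$ is central in $G$, and $x$ acts fixed point freely on $A$.
   Context: $\mathfrak{Y}_n$ denotes the class of all groups $G$ such that $N_G(A)=A$ for every non-abelian subgroup $A\le G$. A $p'$-group is a group whose order is coprime to $p$. ''$x$ acts fixed point freely on $A$'' means the only $a\in A$ with $a^x=a$ is the identity. *)

(* Defs.v *)
From mathcomp Require Import all_boot all_fingroup all_solvable.
Set Implicit Arguments. Unset Strict Implicit. Unset Printing Implicit Defensive.
Local Open Scope group_scope.

Definition Yn (gT : finGroupType) (G : {group gT}) : Prop :=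
  forall A : {group gT}, A \subset G -> ~~ abelian A -> 'N_G(A) = A.

(* Main.v *)
Require Import Defs.
From mathcomp Require Import all_boot all_fingroup all_solvable.
Set Implicit Arguments. Unset Strict Implicit. Unset Printing Implicit Defensive.
Local Open Scope group_scope.

Lemma nonnil_Sylow (gT : finGroupType) (G : {group gT}) :
  ~~ nilpotent G -> exists p (P : {group gT}), [/\ prime p, p.-Sylow(G) P & ~~ (P <| G)].
Proof.
move=> nnil.
have [P /andP[sylP nnP] | allN] := pickP [pred P : {group gT} | Sylow G P && ~~ (P <| G)].
  by case/SylowP: sylP => p pr sylpP; exists p, P.
case/negP: nnil.
have sGF : G \subset 'F(G).
  rewrite -{1}(Sylow_gen G) gen_subG; apply/bigcupsP => P sylP.
  have := allN P; rewrite /= sylP /= => /negbFE nPG.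
  apply: Fitting_max nPG _; case/SylowP: sylP => p _ /pHall_pgroup; exact: pgroup_nil.
exact: nilpotentS sGF (Fitting_nil G).
Qed.

Lemma fwd (gT : finGroupType) (G : {group gT}) :
  solvable G -> ~~ nilpotent G -> Yn G ->
   exists (x : gT) (p : nat) (A : {group gT}),
     [/\ prime p, p.-group <[x]>, A ><| <[x]> = G & abelian A] /\
     [/\ p^'.-group A, x ^+ p \in 'Z(G)
       & forall a, a \in A -> a ^ x = a -> a = 1].
Proof.
move=> solG nnil Y.
have ntG : G :!=: 1 by apply: contraNneq nnil => ->; exact: nilpotent1.
have sDG : G^`(1) \subset G := der_sub 1 G.
have nDG : G^`(1) <| G := der_normal 1 G.
have prD : G^`(1) \proper G := sol_der1_proper solG (subxx G) ntG.
have abP : forall H : {group gT}, G^`(1) \subset H -> H \proper G -> abelian H.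
  move=> H sDH prH; apply/negPn/negP => nab.
  have sHG := proper_sub prH.
  have := Y H sHG nab; rewrite (setIidPl (normal_norm (sub_der1_normal sDH sHG))).
  by move=> eGH; move: prH; rewrite -eGH properxx.
have abD : abelian G^`(1) by apply: abP.
have [p [P [pr sylP nnP]]] := nonnil_Sylow nnil.
have sPG := pHall_sub sylP; have pP := pHall_pgroup sylP.
have nDP : P \subset 'N(G^`(1)) := subset_trans sPG (normal_norm nDG).
have eG : P * G^`(1) = G.
  have sJG : P <*> G^`(1) \subset G by rewrite join_subG sPG sDG.
  rewrite -norm_joinEl //; apply/eqP; rewrite eqEproper sJG /=.
  apply/negP => prJ; case/negP: nnP.
  have abJ : abelian (P <*> G^`(1)) by apply: abP; rewrite ?joing_subr.
  have sylPJ : p.-Sylow(P <*> G^`(1)) P := pHall_subl (joing_subl _ _) sJG sylP.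
  rewrite (nilpotent_Hall_pcore (abelian_nil abJ) sylPJ).
  apply: char_normal_trans (pcore_char _ _) _.
  by apply: sub_der1_normal; rewrite ?joing_subr.
pose A := 'O_p^'(G^`(1)).
have nAG : A <| G := char_normal_trans (pcore_char _ _) nDG.
have sAG := normal_sub nAG.
have abA : abelian A := abelianS (pcore_sub _ _) abD.
have p'A : p^'.-group A := pcore_pgroup _ _.
have coAP : coprime #|A| #|P| by rewrite coprime_sym (pnat_coprime pP).
have tiAP : A :&: P = 1 := coprime_TIg coAP.
have nAP : P \subset 'N(A) := subset_trans sPG (normal_norm nAG).
have sOP : 'O_p(G^`(1)) \subset P.
  apply: normal_sub_max_pgroup (Hall_max sylP) (pcore_pgroup _ _) _.
  exact: char_normal_trans (pcore_char _ _) nDG.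
have eAP : A * P = G.
  have dD := dprodW (nilpotent_pcoreC p (abelian_nil abD)).
  rewrite -(normC nAP) -{1}eG -dD mulgA (mulGSid sOP) //.
have sdAP : A ><| P = G by rewrite sdprodE.
have ncPA : ~~ (P \subset 'C(A)).
  apply: contra nnP => cPA; rewrite /normal sPG -eAP mul_subG ?normG //.
  by apply: cents_norm; rewrite centsC.
have [x Px nCx] := subsetPn ncPA.
have Gx : x \in G := subsetP sPG x Px.
have sxP : <[x]> \subset P by rewrite cycle_subG.
have nAx : <[x]> \subset 'N(A) := subset_trans sxP nAP.
have tiAxP : forall y, y \in P -> (A * <[y]>) :&: P = <[y]>.
  move=> y Py; rewrite setIC -group_modr ?cycle_subG // setIC tiAP mul1g //.
(* joins with A are non-abelian if the generator does not centralise A *)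
have YL : forall y, y \in P -> y \notin 'C(A) -> 'N_G(A <*> <[y]>) = A <*> <[y]>.
  move=> y Py nCy; apply: Y.
    by rewrite join_subG sAG cycle_subG (subsetP sPG).
  apply: contra nCy => abL.
  have xL : y \in A <*> <[y]> := subsetP (joing_subr _ _) y (cycle_id y).
  exact: subsetP (centS (joing_subl A <[y]>)) y (subsetP abL y xL).
have eP : <[x]> = P.
  apply/eqP; rewrite eqEproper sxP /=; apply/negP => prx.
  have [_ [n Nn nxn]] := properP (nilpotent_proper_norm (pgroup_nil pP) prx).
  move: Nn; rewrite inE => /andP[Pn Nxn].
  case/negP: nxn; suff: n \in (A * <[x]>) :&: P by rewrite tiAxP.
  rewrite inE Pn andbT -norm_joinEr //.
  rewrite -(YL x Px nCx) inE (subsetP sPG n Pn) /=.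
  rewrite -cycle_subG normsY // cycle_subG ?(subsetP (normal_norm nAG)) ?(subsetP sPG) //.
have px : p.-group <[x]> by rewrite eP.
have sdAx : A ><| <[x]> = G by rewrite eP.
have eAx : A * <[x]> = G by rewrite eP.
have ntx : <[x]> != 1.
  apply: contra nCx; rewrite cycle_eq1 => /eqP ->; exact: group1.
have [_ pdx _] := pgroup_pdiv px ntx.
have coAx : coprime #|A| #|<[x]>| by rewrite eP.
have xpZ : x ^+ p \in 'Z(G).
  have xpC : x ^+ p \in 'C(A).
    apply/negPn/negP => nC.
    have Pxp : x ^+ p \in P := groupX p Px.
    have N2 := YL _ Pxp nC.
    have : x \in 'N_G(A <*> <[x ^+ p]>).
      rewrite inE Gx -cycle_subG normsY //.
      by apply: cents_norm; apply: sub_abelian_cent (cycle_abelian x) _; rewrite cycleX.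
    rewrite N2 norm_joinEr ?(subset_trans (cycleX x p) nAx) // => xL.
    have : x \in <[x ^+ p]> by rewrite -(tiAxP _ Pxp) inE xL.
    rewrite -cycle_subG => /subset_leq_card.
    rewrite -!orderE orderXdiv // => le.
    have : #[x] %/ p < #[x] by rewrite ltn_Pdiv ?prime_gt1 // orderE cardG_gt0.
    by rewrite ltnNge le.
  rewrite inE (groupX p Gx) -eAx centM inE xpC.
  by apply: subsetP (cycle_abelian x) _ (mem_cycle x p).
pose B := [~: A, <[x]>].
have sBA : B \subset A by rewrite commg_subl.
have nBx : <[x]> \subset 'N(B) := commg_normr _ _.
have nBA : A \subset 'N(B) by apply: cents_norm; apply: sub_abelian_cent abA sBA.
have cTI : 'C_B(<[x]>) = 1 := coprime_abel_cent_TI nAx coAx abA.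
have nabH : ~~ abelian (B <*> <[x]>).
  apply: contra nCx => abH.
  have cBx : B \subset 'C(<[x]>).
    rewrite centsC; apply: subset_trans (joing_subr B <[x]>) _.
    exact: subset_trans abH (centS (joing_subl _ _)).
  have B1 : B = 1 by rewrite -cTI; apply/esym/setIidPl.
  have : <[x]> \subset 'C(A) by rewrite centsC; apply/commG1P.
  by rewrite cycle_subG.
have sHG : B <*> <[x]> \subset G.
  by rewrite join_subG (subset_trans sBA sAG) cycle_subG.
have nHG : G \subset 'N(B <*> <[x]>).
  rewrite -eAx mul_subG //; last by rewrite normsY ?normG.
  apply/subsetP => a Aa; rewrite inE conjYg join_subG.
  rewrite (normP (subsetP nBA a Aa)) joing_subl /= -cycleJ cycle_subG conjg_mulR.
  rewrite groupM ?(subsetP (joing_subr _ _) x (cycle_id x)) //.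
  apply: subsetP (joing_subl _ _) _ _.
  by rewrite /B commGC mem_commg ?cycle_id.
have eH : B <*> <[x]> = G.
  by rewrite -(Y _ sHG nabH) (setIidPl nHG).
have eBA : B = A.
  apply/eqP; rewrite eqEsubset sBA /=.
  have: A \subset B * <[x]> by rewrite -norm_joinEr // eH.
  move/setIidPl <-; rewrite setIC -group_modl // setIC.
  by rewrite (coprime_TIg coAx) mulg1.
exists x, p, A; split; split => //.
move=> a Aa fx.
have : a \in 'C_B(<[x]>).
  rewrite inE eBA Aa cent_cycle; apply/cent1P.
  by rewrite /commute -{2}fx conjgE mulKVg.
by rewrite cTI => /set1P.
Qed.

Lemma bwd (gT : finGroupType) (G : {group gT}) (x : gT) (p : nat) (A : {group gT}) :
  prime p -> p.-group <[x]> -> A ><| <[x]> = G -> abelian A ->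
  p^'.-group A -> x ^+ p \in 'Z(G) ->
  (forall a, a \in A -> a ^ x = a -> a = 1) -> Yn G.
Proof.
move=> pr px sdAx abA p'A xpZ fpf H sHG nabH.
have [nAG sxG eAx nAx tiAx] := sdprod_context sdAx.
have sAG := normal_sub nAG.
have Gx : x \in G by rewrite -cycle_subG.
have coAx : coprime #|A| #|<[x]>| by rewrite coprime_sym (pnat_coprime px).
have CA1 : 'C_A(<[x]>) = 1.
  apply/trivgP/subsetP => a /setIP[Aa /centP cax]; have := cax x (cycle_id x) => {}cax.
  by rewrite inE; apply/eqP/fpf => //; rewrite conjgE cax mulKg.
have NGx : 'N_G(<[x]>) \subset <[x]>.
  rewrite -eAx setIC -group_modr ?normG // setIC coprime_norm_cent // CA1 mul1g.
  exact: subxx.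
have hallA : p^'.-Hall(G) A.
  by rewrite /pHall sAG p'A -(index_sdprod sdAx) pnatNK.
have OA : 'O_p^'(G) = A := normal_Hall_pcore hallA nAG.
have sylx : p.-Sylow(G) <[x]>.
  rewrite /pHall sxG px -divgS // -(sdprod_card sdAx) mulnK ?cardG_gt0 //.
have xpC : x ^+ p \in 'C(G) by move: xpZ; rewrite inE => /andP[].
have cjp : forall h, h \in G -> (x ^+ p) ^ h = x ^+ p.
  move=> h Gh; rewrite conjgE; have := centP xpC h Gh.
  by rewrite /commute => ->; rewrite mulKg.
have [Q sylQ] := Sylow_exists p H.
have sQH := pHall_sub sylQ; have pQ := pHall_pgroup sylQ.
have [S sylS sQS] := Sylow_superset (subset_trans sQH sHG) pQ.
have [g Gg eS] := Sylow_trans sylx sylS.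
have [eQS | neQS] := eqVneq (Q : {set gT}) S.
  apply/eqP; rewrite eqEsubset subsetI sHG normG andbT.
  have F := Frattini_arg (normalSG sHG) sylQ.
  rewrite -{1}F mul_subG //.
  apply: subset_trans (setSI _ (subsetIl G 'N(H))) _.
  apply: subset_trans sQH.
  rewrite eQS eS -{1}(conjGid Gg) normJ -conjIg conjSg //.
have eSz : S :=: <[x ^ g]> by rewrite cycleJ.
have zp : (x ^ g) ^+ p = x ^+ p by rewrite -conjXg cjp.
have sQxp : Q \subset <[x ^+ p]>.
  have [q eQ] := cyclicP (cyclicS (sQS : Q \subset S) (etrans (congr1 cyclic eSz) (cycle_cyclic _))).
  have : q \in <[x ^ g]> by rewrite -eSz (subsetP sQS) // eQ cycle_id.
  case/cycleP => i qi.
  have [/dvdnP[k ik] | ndvd] := boolP (p %| i).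
    by rewrite eQ cycle_subG qi ik mulnC expgM zp mem_cycle.
  case/negP: neQS; rewrite eqEcard sQS /= eSz eQ -!orderE qi orderXgcd.
  have pz : p.-nat #[x ^ g] by rewrite orderE -eSz; exact: (pHall_pgroup sylS).
  have co : coprime #[x ^ g] i by apply: (pnat_coprime pz); rewrite p'natE.
  by rewrite (eqP co) divn1.
have sHK : H \subset A <*> <[x ^+ p]>.
  rewrite -(Sylow_gen H) gen_subG; apply/bigcupsP => P sylP0.
  case/SylowP: sylP0 => r pr_r sylrP.
  have [erp | nrp] := eqVneq r p.
    rewrite erp in sylrP; have [h Hh eP] := Sylow_trans sylQ sylrP.
    apply: subset_trans (joing_subr _ _); rewrite eP.
    have Gh := subsetP sHG h Hh.
    by rewrite -(cjp h Gh) cycleJ conjSg.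
  apply: subset_trans (joing_subl _ _).
  have sPG := subset_trans (pHall_sub sylrP) sHG.
  rewrite -OA sub_Hall_pcore ?OA //.
  apply: sub_pgroup (pHall_pgroup sylrP) => q /eqnP-> /=.
  by rewrite inE /= nrp.
case/negP: nabH; apply: abelianS sHK _.
have nAxp : <[x ^+ p]> \subset 'N(A) := subset_trans (cycleX x p) nAx.
rewrite norm_joinEr // abelianM abA cycle_abelian /= cycle_subG.
exact: subsetP (centS sAG) _ xpC.
Qed.

Theorem theorem2p13 (gT : finGroupType) (G : {group gT}) :
  solvable G -> ~~ nilpotent G ->
  (Yn G <->
   exists (x : gT) (p : nat) (A : {group gT}),
     [/\ prime p, p.-group <[x]>, A ><| <[x]> = G & abelian A] /\
     [/\ p^'.-group A, x ^+ p \in 'Z(G)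
       & forall a, a \in A -> a ^ x = a -> a = 1]).
Proof.
move=> solG nnil; split; first exact: fwd.
by case=> x [p [A [[pr px sd abA] [p'A xpZ fpf]]]]; exact: bwd sd abA p'A xpZ fpf.
Qed.
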